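(* Let $(H,\beta)$ be a monoidal Hom-bialgebra and let $(A,\alpha)$ be a left $(H,\beta)$-Hom-comodule algebra with left Hom-coaction $\varphi:A\to H\otimes A$, $\varphi(a)=a_{(-1)}\otimes a_{(0)}$. Let $(\Gamma,\gamma)$ be a first order differential calculus over $(A,\alpha)$ with differential $d:A\to\Gamma$. Then the following are equivalent: (1) $(\Gamma,\gamma)$ is left-covariant with respect to $(H,\beta)$; (2) there is a morphism $\phi:(\Gamma,\gamma)\to(H\otimes\Gamma,\beta\otimes\gamma)$ in $\widetilde{\mathcal{H}}(\mathcal{M}_k)$ such that $\phi(a\cdot db)=\varphi(a)\,(\mathrm{id}\otimes d)(\varphi(b))$ for all $a,b\in A$; (3) for all finite families $a_i,b_i\in A$, $\sum_i a_i\cdot db_i=0$ in $\Gamma$ implies $\sum_i\varphi(a_i)\,(\mathrm{id}\otimes d)(\varphi(b_i))=0$ in $H\otimes\Gamma$.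
   Context: All vector spaces are over a field $k$. $\widetilde{\mathcal{H}}(\mathcal{M}_k)$ is the category whose objects are pairs $(M,\mu)$ with $M$ a $k$-vector space and $\mu$ a linear automorphism of $M$, and whose morphisms $f:(M,\mu)\to(N,\nu)$ are linear maps with $\nu\circ f=f\circ\mu$; tensor product $(M\otimes N,\mu\otimes\nu)$. A monoidal Hom-algebra $(A,\alpha)$ is an object with multiplication $a\otimes b\mapsto ab$ and unit $1_A$ such that $\alpha(ab)=\alpha(a)\alpha(b)$, $\alpha(1_A)=1_A$, $\alpha(a)(bc)=(ab)\alpha(c)$, $1_Aa=a1_A=\alpha(a)$. A monoidal Hom-coalgebra $(C,\beta)$ is an object with comultiplication $\Delta(c)=c_1\otimes c_2$ and counit $\varepsilon$ satisfying $\Delta\circ\beta=(\beta\otimes\beta)\circ\Delta$, $\varepsilon\circ\beta=\varepsilon$, $\beta^{-1}(c_1)\otimes c_{21}\otimes c_{22}=c_{11}\otimes c_{12}\otimes\beta^{-1}(c_2)$, $\varepsilon(c_1)c_2=c_1\varepsilon(c_2)=\beta^{-1}(c)$. A monoidal Hom-bialgebra is both, with $\Delta,\varepsilon$ multiplicative and unital. Left Hom-module $(M,\mu)$ over $(A,\alpha)$: a morphism $a\otimes m\mapsto a\cdot m$ with $\alpha(a)\cdot(b\cdot m)=(ab)\cdot\mu(m)$, $1_A\cdot m=\mu(m)$; right Hom-module: $(m\cdot a)\cdot\alpha(b)=\mu(m)\cdot(ab)$, $m\cdot 1_A=\mu(m)$; Hom-bimodule: both, with $\alpha(a)\cdot(m\cdot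 b)=(a\cdot m)\cdot\alpha(b)$. A left $(H,\beta)$-Hom-comodule $(M,\mu)$ is given by a morphism $\rho:M\to H\otimes M$, $\rho(m)=m_{(-1)}\otimes m_{(0)}$, with $\beta^{-1}(m_{(-1)})\otimes m_{(0)(-1)}\otimes m_{(0)(0)}=m_{(-1)1}\otimes m_{(-1)2}\otimes\mu^{-1}(m_{(0)})$ and $\varepsilon(m_{(-1)})m_{(0)}=\mu^{-1}(m)$. A left $(H,\beta)$-Hom-comodule algebra $(A,\alpha)$ is a monoidal Hom-algebra which is a left $(H,\beta)$-Hom-comodule via $\varphi$ with $\varphi(ab)=a_{(-1)}b_{(-1)}\otimes a_{(0)}b_{(0)}$ and $\varphi(1_A)=1_H\otimes 1_A$. A first order differential calculus (Hom-FODC) over $(A,\alpha)$ is an $(A,\alpha)$-Hom-bimodule $(\Gamma,\gamma)$ with a linear map $d:A\to\Gamma$ such that $d(ab)=a\cdot db+da\cdot b$, $d\circ\alpha=\gamma\circ d$, and $\Gamma$ is spanned by the elements $(a\cdot db)\cdot c$, $a,b,c\in A$. The space $H\otimes\Gamma$ carries the structures $(h\otimes a)(h'\otimes\omega)=hh'\otimes a\cdot\omega$ and $(h'\otimes\omega)(h\otimes a)=h'h\otimes\omega\cdot a$; thus $\varphi(a)(\mathrm{id}\otimes d)(\varphi(b))=a_{(-1)}b_{(-1)}\otimes a_{(0)}\cdot db_{(0)}$. The Hom-FODC $(\Gamma,\gamma)$ is left-covariant with respect to $(H,\beta)$ if there is a left Hom-coaction $\phi:\Gamma\to H\otimes\Gamma$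 of $(H,\beta)$ on $(\Gamma,\gamma)$ such that $\phi(\alpha(a)\cdot(\omega\cdot b))=\varphi(\alpha(a))(\phi(\omega)\varphi(b))$ for all $a,b\in A$, $\omega\in\Gamma$, and $\phi(da)=(\mathrm{id}\otimes d)\varphi(a)$ for all $a\in A$. *)

(* Defs.v *)
(* Elements of a tensor product U (x) V are represented by finite formal sums,
   i.e. lists s : seq (U * V) standing for \sum_(x <- s) x.1 (x) x.2; two such
   lists denote the same element of U (x) V iff every bilinear map out of U x V
   (into any k-vector space) takes the same value on them (universal property
   of the tensor product).  Triple tensors likewise with trilinear maps. *)
From HB Require Import structures.
From mathcomp Require Import all_boot all_order all_algebra.
Set Implicit Arguments. Unset Strict Implicit. Unset Printing Implicit Defensive.
Import Order.TTheory GRing.Theory Num.Theory.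
Local Open Scope ring_scope.

Section HomDefs.
Variable k : fieldType.

Definition klinear (U V : lmodType k) (f : U -> V) : Prop :=
  forall (a : k) (x y : U), f (a *: x + y) = a *: f x + f y.

Definition kbilinear (U V W : lmodType k) (f : U -> V -> W) : Prop :=
  (forall (a : k) (u1 u2 : U) (v : V), f (a *: u1 + u2) v = a *: f u1 v + f u2 v) /\
  (forall (a : k) (u : U) (v1 v2 : V), f u (a *: v1 + v2) = a *: f u v1 + f u v2).

Definition ktrilinear (U V W X : lmodType k) (f : U -> V -> W -> X) : Prop :=
  (forall (a : k) u1 u2 v w, f (a *: u1 + u2) v w = a *: f u1 v w + f u2 v w) /\
  (forall (a : k) u v1 v2 w, f u (a *: v1 + v2) w = a *: f u v1 w + f u v2 w) /\
  (forall (a : k) u v w1 w2, f u v (a *: w1 + w2) = a *: f u v w1 + f u v w2).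

Definition tensor (U V : lmodType k) := seq (U * V).
Definition tensor3 (U V W : lmodType k) := seq (U * V * W).

Definition teq (U V : lmodType k) (s t : tensor U V) : Prop :=
  forall (X : lmodType k) (f : U -> V -> X), kbilinear f ->
    \sum_(x <- s) f x.1 x.2 = \sum_(x <- t) f x.1 x.2.

Definition teq3 (U V W : lmodType k) (s t : tensor3 U V W) : Prop :=
  forall (X : lmodType k) (f : U -> V -> W -> X), ktrilinear f ->
    \sum_(x <- s) f x.1.1 x.1.2 x.2 = \sum_(x <- t) f x.1.1 x.1.2 x.2.

(* scalar multiple of a tensor; sum of tensors is concatenation *)
Definition tscale (U V : lmodType k) (a : k) (s : tensor U V) : tensor U V :=
  [seq (a *: x.1, x.2) | x <- s].

Definition tmap (U V U' V' : lmodType k) (f : U -> U') (g : V -> V')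
  (s : tensor U V) : tensor U' V' := [seq (f x.1, g x.2) | x <- s].

Definition tlinear (X U V : lmodType k) (f : X -> tensor U V) : Prop :=
  forall (a : k) (x y : X), teq (f (a *: x + y)) (tscale a (f x) ++ f y).

Definition tmul (H M N P : lmodType k) (mulH : H -> H -> H) (m : M -> N -> P)
  (s : tensor H M) (t : tensor H N) : tensor H P :=
  [seq (mulH x.1 y.1, m x.2 y.2) | x <- s, y <- t].

(* ---------- objects of H~(M_k): (M, mu) with mu a linear automorphism,
   mui its inverse ---------- *)
Definition hobj (M : lmodType k) (mu mui : M -> M) : Prop :=
  klinear mu /\ cancel mu mui /\ cancel mui mu.

Definition hom_algebra (A : lmodType k) (al ali : A -> A)
  (mul : A -> A -> A) (one : A) : Prop :=
  ((hobj al ali) /\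
      (kbilinear mul) /\
      ((forall a b, al (mul a b) = mul (al a) (al b))) /\
      (al one = one) /\
      ((forall a b c, mul (al a) (mul b c) = mul (mul a b) (al c))) /\
      ((forall a, mul one a = al a /\ mul a one = al a))).

Definition hom_coalgebra (C : lmodType k) (be bei : C -> C)
  (Delta : C -> tensor C C) (eps : C -> k) : Prop :=
  ((hobj be bei) /\
      (tlinear Delta) /\
      (klinear (eps : C -> k^o)) /\
      ((forall c, teq (Delta (be c)) (tmap be be (Delta c)))) /\
      ((forall c, eps (be c) = eps c)) /\
      ((forall c, teq3 [seq (bei x.1, y.1, y.2) | x <- Delta c, y <- Delta x.2]
                      [seq (y.1, y.2, bei x.2) | x <- Delta c, y <- Delta x.1])) /\
      ((forall c, \sum_(x <- Delta c) eps x.1 *: x.2 = bei c /\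
                 \sum_(x <- Delta c) eps x.2 *: x.1 = bei c))).

Definition hom_bialgebra (H : lmodType k) (be bei : H -> H)
  (mul : H -> H -> H) (one : H) (Delta : H -> tensor H H) (eps : H -> k) : Prop :=
  ((hom_algebra be bei mul one) /\
      (hom_coalgebra be bei Delta eps) /\
      ((forall a b, teq (Delta (mul a b)) (tmul mul mul (Delta a) (Delta b)))) /\
      (teq (Delta one) [:: (one, one)]) /\
      ((forall a b, eps (mul a b) = eps a * eps b)) /\
      (eps one = 1)).

Definition hom_comodule (H : lmodType k) (be bei : H -> H)
  (Delta : H -> tensor H H) (eps : H -> k)
  (M : lmodType k) (mu mui : M -> M) (rho : M -> tensor H M) : Prop :=
  ((hobj mu mui) /\
      (tlinear rho) /\
      ((forall m, teq (rho (mu m)) (tmap be mu (rho m)))) /\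
      ((forall m, teq3 [seq (bei x.1, y.1, y.2) | x <- rho m, y <- rho x.2]
                      [seq (y.1, y.2, mui x.2) | x <- rho m, y <- Delta x.1])) /\
      ((forall m, \sum_(x <- rho m) eps x.1 *: x.2 = mui m))).

Definition hom_comodule_algebra (H : lmodType k) (be bei : H -> H)
  (mulH : H -> H -> H) (oneH : H) (Delta : H -> tensor H H) (eps : H -> k)
  (A : lmodType k) (al ali : A -> A) (mulA : A -> A -> A) (oneA : A)
  (rho : A -> tensor H A) : Prop :=
  ((hom_algebra al ali mulA oneA) /\
      (hom_comodule be bei Delta eps al ali rho) /\
      ((forall a b, teq (rho (mulA a b)) (tmul mulH mulA (rho a) (rho b)))) /\
      (teq (rho oneA) [:: (oneH, oneA)])).

Definition hom_bimodule (A : lmodType k) (al : A -> A) (mulA : A -> A -> A)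
  (oneA : A) (G : lmodType k) (ga gai : G -> G)
  (la : A -> G -> G) (ra : G -> A -> G) : Prop :=
  ((hobj ga gai) /\
      (kbilinear la) /\
      (kbilinear ra) /\
      ((forall a m, ga (la a m) = la (al a) (ga m))) /\
      ((forall m a, ga (ra m a) = ra (ga m) (al a))) /\
      ((forall a b m, la (al a) (la b m) = la (mulA a b) (ga m) /\ la oneA m = ga m)) /\
      ((forall m a b, ra (ra m a) (al b) = ra (ga m) (mulA a b) /\ ra m oneA = ga m)) /\
      ((forall a m b, la (al a) (ra m b) = ra (la a m) (al b)))).

Definition hom_FODC (A : lmodType k) (al : A -> A) (mulA : A -> A -> A)
  (oneA : A) (G : lmodType k) (ga gai : G -> G)
  (la : A -> G -> G) (ra : G -> A -> G) (d : A -> G) : Prop :=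
  ((hom_bimodule al mulA oneA ga gai la ra) /\
      (klinear d) /\
      ((forall a b, d (mulA a b) = la a (d b) + ra (d a) b)) /\
      ((forall a, d (al a) = ga (d a))) /\
      ((forall w : G, exists s : seq (A * A * A),
          w = \sum_(x <- s) ra (la x.1.1 (d x.1.2)) x.2))).

Definition left_covariant (H : lmodType k) (be bei : H -> H)
  (mulH : H -> H -> H) (Delta : H -> tensor H H) (eps : H -> k)
  (A : lmodType k) (al : A -> A) (rho : A -> tensor H A)
  (G : lmodType k) (ga gai : G -> G)
  (la : A -> G -> G) (ra : G -> A -> G) (d : A -> G) : Prop :=
  exists phi : G -> tensor H G,
    ((hom_comodule be bei Delta eps ga gai phi) /\
      ((forall a b w, teq (phi (la (al a) (ra w b)))
                           (tmul mulH la (rho (al a)) (tmul mulH ra (phi w) (rho b))))) /\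
      ((forall a, teq (phi (d a)) (tmap id d (rho a))))).

End HomDefs.

(* Main.v *)
Require Import Defs.
From HB Require Import structures.
From mathcomp Require Import all_boot all_order all_algebra.
From Stdlib Require Import ClassicalEpsilon.
Import GRing.Theory.
Local Open Scope ring_scope.
Set Implicit Arguments. Unset Strict Implicit.

Definition Ev (k : fieldType) (U V X : lmodType k) (f : U -> V -> X) (s : tensor U V) : X :=
  \sum_(x <- s) f x.1 x.2.

Definition Ev3 (k : fieldType) (U V W X : lmodType k) (f : U -> V -> W -> X) (s : tensor3 U V W) : X :=
  \sum_(x <- s) f x.1.1 x.1.2 x.2.

Lemma kl0 (k : fieldType) (U V : lmodType k) (f : U -> V) : klinear f -> f 0 = 0.
Proof.
move=> Hf; have E := Hf 1 0 0; rewrite !scale1r addr0 in E.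
have := congr1 (fun z => z - f 0) E; rewrite /= subrr addrK; by [].
Qed.

Lemma klD (k : fieldType) (U V : lmodType k) (f : U -> V) x y : klinear f -> f (x + y) = f x + f y.
Proof. by move=> Hf; have := Hf 1 x y; rewrite !scale1r. Qed.

Lemma klZ (k : fieldType) (U V : lmodType k) (f : U -> V) a x : klinear f -> f (a *: x) = a *: f x.
Proof. by move=> Hf; have := Hf a x 0; rewrite !addr0 kl0 // addr0. Qed.

Lemma klN (k : fieldType) (U V : lmodType k) (f : U -> V) x : klinear f -> f (- x) = - f x.
Proof. by move=> Hf; rewrite -scaleN1r klZ // scaleN1r. Qed.

Lemma klB (k : fieldType) (U V : lmodType k) (f : U -> V) x y : klinear f -> f (x - y) = f x - f y.
Proof. by move=> Hf; rewrite klD // klN. Qed.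

Lemma kl_sum (k : fieldType) (U V : lmodType k) (f : U -> V) (I : Type) (s : seq I) (F : I -> U) :
  klinear f -> f (\sum_(i <- s) F i) = \sum_(i <- s) f (F i).
Proof.
move=> Hf; elim: s => [|x s IH]; first by rewrite !big_nil kl0.
by rewrite !big_cons klD // IH.
Qed.

Lemma kl_id (k : fieldType) (U : lmodType k) : klinear (fun x : U => x).
Proof. by []. Qed.

Lemma kl_comp (k : fieldType) (U V W : lmodType k) (g : V -> W) (f : U -> V) :
  klinear g -> klinear f -> klinear (fun x => g (f x)).
Proof. by move=> Hg Hf a x y; rewrite Hf Hg. Qed.

Lemma kl_sumf (k : fieldType) (U V : lmodType k) (I : Type) (s : seq I) (F : I -> U -> V) :
  (forall i, klinear (F i)) -> klinear (fun x => \sum_(i <- s) F i x).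
Proof.
move=> HF a x y; rewrite scaler_sumr -big_split /=.
by apply: eq_bigr => i _; rewrite HF.
Qed.

Lemma kbl (k : fieldType) (U V W : lmodType k) (f : U -> V -> W) v :
  kbilinear f -> klinear (fun u => f u v).
Proof. by move=> [H _] a x y; apply: H. Qed.

Lemma kbr (k : fieldType) (U V W : lmodType k) (f : U -> V -> W) u :
  kbilinear f -> klinear (f u).
Proof. by move=> [_ H] a x y; apply: H. Qed.

Lemma kb_mk (k : fieldType) (U V W : lmodType k) (f : U -> V -> W) :
  (forall v, klinear (fun u => f u v)) -> (forall u, klinear (f u)) -> kbilinear f.
Proof. by move=> H1 H2; split=> a x y z; [apply: (H1 z) | apply: (H2 x)]. Qed.

Lemma kb_comp (k : fieldType) (U V U' V' W : lmodType k) (f : U' -> V' -> W) (g : U -> U') (h : V -> V') :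
  kbilinear f -> klinear g -> klinear h -> kbilinear (fun u v => f (g u) (h v)).
Proof.
move=> Hf Hg Hh; apply: kb_mk => [v|u].
  exact: (kl_comp (g := fun z => f z (h v)) (kbl _ Hf) Hg).
exact: (kl_comp (kbr _ Hf) Hh).
Qed.

Lemma kb_sum (k : fieldType) (U V W : lmodType k) (I : Type) (s : seq I) (F : I -> U -> V -> W) :
  (forall i, kbilinear (F i)) -> kbilinear (fun u v => \sum_(i <- s) F i u v).
Proof.
move=> HF; apply: kb_mk => [v|u].
  by apply: kl_sumf => i; apply: (kbl _ (HF i)).
by apply: kl_sumf => i; apply: (kbr _ (HF i)).
Qed.

Lemma Ev_cat (k : fieldType) (U V X : lmodType k) (f : U -> V -> X) s t :
  Ev f (s ++ t) = Ev f s + Ev f t.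
Proof. by rewrite /Ev big_cat. Qed.

Lemma Ev_nil (k : fieldType) (U V X : lmodType k) (f : U -> V -> X) :
  Ev f [::] = 0.
Proof. by rewrite /Ev big_nil. Qed.

Lemma Ev_cons (k : fieldType) (U V X : lmodType k) (f : U -> V -> X) x s :
  Ev f (x :: s) = f x.1 x.2 + Ev f s.
Proof. by rewrite /Ev big_cons. Qed.

Lemma Ev_tscale (k : fieldType) (U V X : lmodType k) (f : U -> V -> X) a s :
  kbilinear f -> Ev f (tscale a s) = a *: Ev f s.
Proof.
move=> Hf; rewrite /Ev /tscale big_map scaler_sumr; apply: eq_bigr => x _.
exact: (klZ _ _ (kbl _ Hf)).
Qed.

Lemma Ev_tmap (k : fieldType) (U V U' V' X : lmodType k) (f : U' -> V' -> X) (g : U -> U') (h : V -> V') s :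
  Ev f (tmap g h s) = Ev (fun u v => f (g u) (h v)) s.
Proof. by rewrite /Ev /tmap big_map. Qed.

Lemma Ev_tmul (k : fieldType) (H M N P X : lmodType k) (mH : H -> H -> H) (m : M -> N -> P)
  (f : H -> P -> X) s t :
  Ev f (tmul mH m s t) = \sum_(x <- s) \sum_(y <- t) f (mH x.1 y.1) (m x.2 y.2).
Proof. by rewrite /Ev /tmul big_allpairs_dep. Qed.



Lemma teqE (k : fieldType) (U V X : lmodType k) (s t : tensor U V) (f : U -> V -> X) :
  teq s t -> kbilinear f -> Ev f s = Ev f t.
Proof. by move=> H Hf; apply: H. Qed.

Lemma teq_refl (k : fieldType) (U V : lmodType k) (s : tensor U V) : teq s s.
Proof. by []. Qed.

Lemma teq_sym (k : fieldType) (U V : lmodType k) (s t : tensor U V) : teq s t -> teq t s.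
Proof. by move=> H X f Hf; rewrite H. Qed.

Lemma teq_trans (k : fieldType) (U V : lmodType k) (s t u : tensor U V) : teq s t -> teq t u -> teq s u.
Proof. by move=> H1 H2 X f Hf; rewrite H1 // H2. Qed.

Lemma teq_cat (k : fieldType) (U V : lmodType k) (s t s' t' : tensor U V) :
  teq s s' -> teq t t' -> teq (s ++ t) (s' ++ t').
Proof. by move=> H1 H2 X f Hf; rewrite -!/(Ev f _) !Ev_cat (teqE H1 Hf) (teqE H2 Hf). Qed.

Lemma teq_tmap (k : fieldType) (U V U' V' : lmodType k) (g : U -> U') (h : V -> V') s s' :
  klinear g -> klinear h -> teq s s' -> teq (tmap g h s) (tmap g h s').
Proof.
move=> Hg Hh H X f Hf; rewrite -!/(Ev f _) !Ev_tmap.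
by apply: teqE H _; apply: kb_comp.
Qed.

Lemma teq_tmul_l (k : fieldType) (H M N P : lmodType k) (mH : H -> H -> H) (m : M -> N -> P) s s' t :
  kbilinear mH -> kbilinear m -> teq s s' -> teq (tmul mH m s t) (tmul mH m s' t).
Proof.
move=> H1 H2 Hs X f Hf; rewrite -!/(Ev f _) !Ev_tmul.
apply: (teqE (f := fun u v => \sum_(y <- t) f (mH u y.1) (m v y.2))) Hs _.
apply: kb_sum => y; apply: kb_comp => //; [exact: kbl H1 | exact: kbl H2].
Qed.

Lemma teq_tmul_r (k : fieldType) (H M N P : lmodType k) (mH : H -> H -> H) (m : M -> N -> P) s t t' :
  kbilinear mH -> kbilinear m -> teq t t' -> teq (tmul mH m s t) (tmul mH m s t').
Proof.
move=> H1 H2 Ht X f Hf; rewrite -!/(Ev f _) !Ev_tmul.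
apply: eq_bigr => x _.
apply: (teqE (f := fun u v => f (mH x.1 u) (m x.2 v))) Ht _.
apply: kb_comp => //; [exact: kbr H1 | exact: kbr H2].
Qed.

Lemma Ev_lin (k : fieldType) (U V X Y : lmodType k) (f : U -> V -> X) (phi : Y -> tensor U V) :
  tlinear phi -> kbilinear f -> klinear (fun w => Ev f (phi w)).
Proof. by move=> Hp Hf a x y; rewrite (teqE (Hp a x y) Hf) Ev_cat Ev_tscale. Qed.

Lemma kl_inv (k : fieldType) (U : lmodType k) (f g : U -> U) :
  klinear f -> cancel f g -> cancel g f -> klinear g.
Proof.
move=> Hf c1 c2 a x y; apply: (can_inj c1).
by rewrite Hf !c2.
Qed.

Lemma teq3E (k : fieldType) (U V W X : lmodType k) (s t : tensor3 U V W) (F : U -> V -> W -> X) :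
  teq3 s t -> ktrilinear F -> Ev3 F s = Ev3 F t.
Proof. by move=> H HF; apply: H. Qed.

Lemma kt_mk (k : fieldType) (U V W X : lmodType k) (F : U -> V -> W -> X) :
  (forall v w, klinear (fun u => F u v w)) -> (forall u w, klinear (fun v => F u v w)) ->
  (forall u v, klinear (F u v)) -> ktrilinear F.
Proof.
move=> H1 H2 H3; split; [|split] => a x y z w.
- exact: (H1 z w).
- exact: (H2 x w).
- exact: (H3 x y).
Qed.

Lemma kt1 (k : fieldType) (U V W X : lmodType k) (F : U -> V -> W -> X) v w :
  ktrilinear F -> klinear (fun u => F u v w).
Proof. by move=> [H _] a x y; apply: H. Qed.
Lemma kt2 (k : fieldType) (U V W X : lmodType k) (F : U -> V -> W -> X) u w :
  ktrilinear F -> klinear (fun v => F u v w).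
Proof. by move=> [_ [H _]] a x y; apply: H. Qed.
Lemma kt3 (k : fieldType) (U V W X : lmodType k) (F : U -> V -> W -> X) u v :
  ktrilinear F -> klinear (F u v).
Proof. by move=> [_ [_ H]] a x y; apply: H. Qed.

Lemma kt_comp (k : fieldType) (U V W U' V' W' X : lmodType k) (F : U' -> V' -> W' -> X)
  (g1 : U -> U') (g2 : V -> V') (g3 : W -> W') :
  ktrilinear F -> klinear g1 -> klinear g2 -> klinear g3 ->
  ktrilinear (fun u v w => F (g1 u) (g2 v) (g3 w)).
Proof.
move=> HF H1 H2 H3; apply: kt_mk => [v w|u w|u v].
- exact: (kl_comp (g := fun z => F z (g2 v) (g3 w)) (kt1 _ _ HF) H1).
- exact: (kl_comp (g := fun z => F (g1 u) z (g3 w)) (kt2 _ _ HF) H2).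
- exact: (kl_comp (kt3 _ _ HF) H3).
Qed.

Lemma kt_sum (k : fieldType) (U V W X : lmodType k) (I : Type) (s : seq I) (F : I -> U -> V -> W -> X) :
  (forall i, ktrilinear (F i)) -> ktrilinear (fun u v w => \sum_(i <- s) F i u v w).
Proof.
move=> HF; apply: kt_mk => [v w|u w|u v].
- by apply: kl_sumf => i; apply: (kt1 _ _ (HF i)).
- by apply: kl_sumf => i; apply: (kt2 _ _ (HF i)).
- by apply: kl_sumf => i; apply: (kt3 _ _ (HF i)).
Qed.

Lemma kt23 (k : fieldType) (U V W X : lmodType k) (F : U -> V -> W -> X) u :
  ktrilinear F -> kbilinear (F u).
Proof. by move=> HF; apply: kb_mk => [w|v]; [apply: kt2 | apply: kt3]. Qed.

Lemma kt12 (k : fieldType) (U V W X : lmodType k) (F : U -> V -> W -> X) w :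
  ktrilinear F -> kbilinear (fun u v => F u v w).
Proof. by move=> HF; apply: kb_mk => [v|u]; [apply: kt1 | apply: kt2]. Qed.

Lemma sum4B (k : fieldType) (X : lmodType k) (I J K L : Type) (s1 : seq I) (s2 : seq J) (s3 : seq K) (s4 : seq L)
  (F G : I -> J -> K -> L -> X) :
  \sum_(i <- s1) \sum_(j <- s2) \sum_(l <- s3) \sum_(m <- s4) (F i j l m - G i j l m) =
  \sum_(i <- s1) \sum_(j <- s2) \sum_(l <- s3) \sum_(m <- s4) F i j l m -
  \sum_(i <- s1) \sum_(j <- s2) \sum_(l <- s3) \sum_(m <- s4) G i j l m.
Proof.
rewrite -sumrB; apply: eq_bigr => i _; rewrite -sumrB; apply: eq_bigr => j _.
rewrite -sumrB; apply: eq_bigr => l _; by rewrite -sumrB.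
Qed.

Lemma sum4_perm (k : fieldType) (X : lmodType k) (I J K L : Type) (s1 : seq I) (s2 : seq J) (s3 : seq K) (s4 : seq L)
  (F : I -> J -> K -> L -> X) :
  \sum_(i <- s1) \sum_(j <- s2) \sum_(l <- s3) \sum_(m <- s4) F i j l m =
  \sum_(j <- s2) \sum_(l <- s3) \sum_(i <- s1) \sum_(m <- s4) F i j l m.
Proof.
rewrite exchange_big; apply: eq_bigr => j _; by rewrite exchange_big.
Qed.

Theorem mainTheorem1 (k : fieldType)
  (H : lmodType k) (be bei : H -> H) (mulH : H -> H -> H) (oneH : H)
  (Delta : H -> tensor H H) (eps : H -> k)
  (A : lmodType k) (al ali : A -> A) (mulA : A -> A -> A) (oneA : A)
  (rho : A -> tensor H A)
  (G : lmodType k) (ga gai : G -> G)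
  (la : A -> G -> G) (ra : G -> A -> G) (d : A -> G) :
  hom_bialgebra be bei mulH oneH Delta eps ->
  hom_comodule_algebra be bei mulH oneH Delta eps al ali mulA oneA rho ->
  hom_FODC al mulA oneA ga gai la ra d ->
  (left_covariant be bei mulH Delta eps al rho ga gai la ra d <->
   exists phi : G -> tensor H G,
     [/\ tlinear phi,
         (forall w, teq (phi (ga w)) (tmap be ga (phi w))) &
         (forall a b, teq (phi (la a (d b))) (tmul mulH la (rho a) (tmap id d (rho b))))])
  /\
  ((exists phi : G -> tensor H G,
     [/\ tlinear phi,
         (forall w, teq (phi (ga w)) (tmap be ga (phi w))) &
         (forall a b, teq (phi (la a (d b))) (tmul mulH la (rho a) (tmap id d (rho b))))])
   <->
   (forall s : seq (A * A),
      \sum_(x <- s) la x.1 (d x.2) = 0 ->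
      teq (flatten [seq tmul mulH la (rho x.1) (tmap id d (rho x.2)) | x <- s]) [::])).
Proof.
move=> [HalgH [HcoH [HDmul [HD1 [Hemul He1]]]]] [HalgA [Hcom [Hrhomul Hrho1]]]
  [Hbim [Hdl [Hleib [Hdal Hspan]]]].
move: HalgH => [[Hbel [Hbc1 Hbc2]] [HmulH [Hbemul [Hbe1 [HassH HunitH]]]]].
move: HcoH => [_ [HDlin [Heps [HDbe [Hepsbe [HDcoass HDcounit]]]]]].
move: HalgA => [[Hall [Halc1 Halc2]] [HmulA [Halmul [Hal1 [HassA HunitA]]]]].
move: Hcom => [_ [Hrholin [Hrhoal [Hrhocoass Hrhocounit]]]].
move: Hbim => [[Hgal [Hgc1 Hgc2]] [Hla [Hra [Hgala [Hgara [Hlaassoc [Hraassoc Hlara]]]]]]].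
have Hbil := kl_inv Hbel Hbc1 Hbc2.
have Hali := kl_inv Hall Halc1 Halc2.
have Hgail := kl_inv Hgal Hgc1 Hgc2.
have HlaD : kbilinear (fun a b => la a (d b)) := kb_comp Hla (@kl_id _ A) Hdl.
have Id1 : forall a b c, ra (la a (d b)) c =
    la (al a) (d (mulA b (ali c))) - la (mulA a b) (d c).
  move=> a b c.
  have E1 := Hlara a (d b) (ali c); rewrite Halc2 in E1; rewrite -E1.
  have E2 : ra (d b) (ali c) = d (mulA b (ali c)) - la b (d (ali c)).
    by rewrite Hleib addrC addKr.
  by rewrite E2 (klB _ _ (kbr _ Hla)) (Hlaassoc a b _).1 -Hdal Halc2.
have Span : forall w, exists s : seq (A * A), w = \sum_(x <- s) la x.1 (d x.2).
  move=> w; have [s3 ->] := Hspan w.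
  elim: s3 => [|x s3 [s IH]]; first by exists [::]; rewrite !big_nil.
  exists ([:: (al x.1.1, mulA x.1.2 (ali x.2)); (- mulA x.1.1 x.1.2, x.2)] ++ s).
  rewrite big_cons IH big_cat /= !big_cons big_nil Id1.
  by rewrite (klN _ (kbl _ Hla)) addr0.
  idtac.
have Ext : forall (X : lmodType k) (L1 L2 : G -> X), klinear L1 -> klinear L2 ->
    (forall a b, L1 (la a (d b)) = L2 (la a (d b))) -> forall w, L1 w = L2 w.
  move=> X L1 L2 H1 H2 HL w; have [s ->] := Span w.
  rewrite (kl_sum _ _ H1) (kl_sum _ _ H2); apply: eq_bigr => x _; exact: HL.
pose T a b := tmul mulH la (rho a) (tmap id d (rho b)).
have EvT : forall (X : lmodType k) (f : H -> G -> X) a b, Ev f (T a b) =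
    \sum_(x <- rho a) \sum_(y <- rho b) f (mulH x.1 y.1) (la x.2 (d y.2)).
  by move=> X f a b; rewrite Ev_tmul; apply: eq_bigr => x _; rewrite big_map.
have EvT_bil : forall (X : lmodType k) (f : H -> G -> X), kbilinear f ->
    kbilinear (fun a b => Ev f (T a b)).
  move=> X f Hf; apply: kb_mk => [b|a] c x y; rewrite !EvT.
    have Hg : kbilinear (fun u v => \sum_(y <- rho b) f (mulH u y.1) (la v (d y.2))).
      apply: kb_sum => z; apply: kb_comp => //; [exact: kbl HmulH | exact: kbl Hla].
    exact: (Ev_lin Hrholin Hg c x y).
  have Hs : klinear (fun b => \sum_(z <- rho a) Ev (fun u v => f (mulH z.1 u) (la z.2 (d v))) (rho b)).
    apply: kl_sumf => z; apply: Ev_lin => //; apply: kb_comp => //; first exact: kbr HmulH.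
    exact: kl_comp (kbr _ Hla) Hdl.
  exact: (Hs c x y).
have HZs : forall c (t : seq (A * A)),
    \sum_(z <- t) la (c *: z.1) (d z.2) = c *: \sum_(z <- t) la z.1 (d z.2).
  move=> c t; rewrite scaler_sumr; apply: eq_bigr => z _; exact: klZ _ _ (kbl _ Hla).
have HNs : forall (t : seq (A * A)),
    \sum_(z <- t) la (- z.1) (d z.2) = - \sum_(z <- t) la z.1 (d z.2).
  move=> t; rewrite -sumrN; apply: eq_bigr => z _; exact: klN _ (kbl _ Hla).
have HZe : forall (X : lmodType k) (f : H -> G -> X), kbilinear f -> forall c (t : seq (A * A)),
    \sum_(z <- t) Ev f (T (c *: z.1) z.2) = c *: \sum_(z <- t) Ev f (T z.1 z.2).
  move=> X f Hf c t; rewrite scaler_sumr; apply: eq_bigr => z _.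
  exact: klZ _ _ (kbl _ (EvT_bil X f Hf)).
have HNe : forall (X : lmodType k) (f : H -> G -> X), kbilinear f -> forall (t : seq (A * A)),
    \sum_(z <- t) Ev f (T (- z.1) z.2) = - \sum_(z <- t) Ev f (T z.1 z.2).
  move=> X f Hf t; rewrite -sumrN; apply: eq_bigr => z _.
  exact: klN _ (kbl _ (EvT_bil X f Hf)).
have TA : forall (X : lmodType k) (f : H -> G -> X) a b, kbilinear f ->
    Ev f (T (al a) (al b)) = Ev (fun u v => f (be u) (ga v)) (T a b).
  move=> X f a b Hf; rewrite !EvT.
  rewrite (Hrhoal a X (fun u v => \sum_(y <- rho (al b)) f (mulH u y.1) (la v (d y.2)))); last first.
    apply: kb_sum => z; apply: kb_comp => //; [exact: kbl HmulH | exact: kbl Hla].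
  rewrite big_map; apply: eq_bigr => x _ /=.
  rewrite (Hrhoal b X (fun u v => f (mulH (be x.1) u) (la (al x.2) (d v)))); last first.
    apply: kb_comp => //; first exact: kbr HmulH.
    exact: kl_comp (kbr _ Hla) Hdl.
  rewrite big_map; apply: eq_bigr => y _ /=.
  by rewrite Hbemul Hgala -Hdal.
split; last split.
  split.
  - move=> [phi [[_ [Hpl [Hpga _]]] [Hcov Hphid]]].
    exists phi; split => // a b.
    have E : la a (d b) = la (al (ali a)) (ra (d (ali b)) oneA).
      by rewrite (Hraassoc _ oneA oneA).2 -Hdal !Halc2.
    rewrite E; apply: (teq_trans (Hcov (ali a) oneA (d (ali b)))).
    rewrite Halc2; apply: teq_tmul_r => //.
    apply: (teq_trans (teq_tmul_l _ HmulH Hra (Hphid (ali b)))).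
    apply: (teq_trans (teq_tmul_r _ HmulH Hra Hrho1)).
    rewrite -{2}[b]Halc2.
    apply: (teq_trans _ (teq_sym (teq_tmap (@kl_id _ H) Hdl (Hrhoal (ali b))))).
    move=> X f Hf; rewrite -!/(Ev f _) Ev_tmul !Ev_tmap /Ev big_map; apply: eq_bigr => x _.
    by rewrite big_seq1 /= (HunitH _).2 (Hraassoc _ oneA oneA).2 -Hdal.
  move=> [phi [Hpl Hpga HphiT]].
  have EvPh : forall (X : lmodType k) (f : H -> G -> X) a b, kbilinear f ->
      Ev f (phi (la a (d b))) = Ev f (T a b).
    move=> X f a b Hf; exact: (teqE (HphiT a b) Hf).
  have Hbeim : forall u v, bei (mulH u v) = mulH (bei u) (bei v).
    by move=> u v; apply: (can_inj Hbc1); rewrite Hbemul !Hbc2.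
  have Hgaig : forall a b, gai (la a (d b)) = la (ali a) (d (ali b)).
    by move=> a b; apply: (can_inj Hgc1); rewrite Hgc2 Hgala -Hdal !Halc2.
  exists phi; split; [split; [by [] | split; [by [] | split; [by [] | split]]] | split].
  -
    move=> w X F HF.
    have G1 : kbilinear (fun h n => Ev (F (bei h)) (phi n)).
      apply: kb_mk => [n|h]; rewrite /Ev.
        by apply: kl_sumf => y; exact: (kl_comp (g := fun z => F z y.1 y.2) (kt1 _ _ HF) Hbil).
      exact: (Ev_lin Hpl (kt23 _ HF)).
    have G2 : kbilinear (fun h n => Ev (fun u v => F u v (gai n)) (Delta h)).
      apply: kb_mk => [n|h]; first exact: (Ev_lin HDlin (kt12 _ HF)).
      by rewrite /Ev; apply: kl_sumf => y; exact: (kl_comp (kt3 _ _ HF) Hgail).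
    have E1 : forall w, \sum_(z <- [seq (bei x.1, y.1, y.2) | x <- phi w, y <- phi x.2]) F z.1.1 z.1.2 z.2
        = Ev (fun h n => Ev (F (bei h)) (phi n)) (phi w).
      by move=> w'; rewrite big_allpairs_dep.
    have E2 : forall w, \sum_(z <- [seq (y.1, y.2, gai x.2) | x <- phi w, y <- Delta x.1]) F z.1.1 z.1.2 z.2
        = Ev (fun h n => Ev (fun u v => F u v (gai n)) (Delta h)) (phi w).
      by move=> w'; rewrite big_allpairs_dep.
    rewrite E1 E2.
    apply: (Ext X (fun w => Ev (fun h n => Ev (F (bei h)) (phi n)) (phi w))
                  (fun w => Ev (fun h n => Ev (fun u v => F u v (gai n)) (Delta h)) (phi w)))
      => [||a b]; [exact: Ev_lin Hpl G1 | exact: Ev_lin Hpl G2 |].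
    rewrite !EvPh // !EvT.
    have Htri1 : forall (t : seq (H * H * A)), ktrilinear (fun u v w =>
        \sum_(q <- t) F (mulH u q.1.1) (mulH v q.1.2) (la w (d q.2))).
      move=> t; apply: kt_sum => q; apply: kt_comp => //;
        [exact: kbl HmulH | exact: kbl HmulH | exact: kbl Hla].
    have Htri2 : forall (p : H * H * A), ktrilinear (fun u v w =>
        F (mulH p.1.1 u) (mulH p.1.2 v) (la p.2 (d w))).
      move=> p; apply: kt_comp => //; [exact: kbr HmulH | exact: kbr HmulH |].
      exact: kl_comp (kbr _ Hla) Hdl.
    transitivity (\sum_(p <- [seq (bei x.1, y.1, y.2) | x <- rho a, y <- rho x.2])
                  \sum_(q <- [seq (bei x.1, y.1, y.2) | x <- rho b, y <- rho x.2])
                  F (mulH p.1.1 q.1.1) (mulH p.1.2 q.1.2) (la p.2 (d q.2))).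
      rewrite big_allpairs_dep /=; apply: eq_bigr => x _.
      under eq_bigr => y _ do rewrite (EvPh _ _ _ _ (kt23 _ HF)) EvT Hbeim.
      under [in RHS]eq_bigr => x' _ do rewrite big_allpairs_dep.
      by rewrite exchange_big.
    transitivity (\sum_(p <- [seq (y.1, y.2, ali x.2) | x <- rho a, y <- Delta x.1])
                  \sum_(q <- [seq (bei x.1, y.1, y.2) | x <- rho b, y <- rho x.2])
                  F (mulH p.1.1 q.1.1) (mulH p.1.2 q.1.2) (la p.2 (d q.2))).
      exact: (Hrhocoass a X _ (Htri1 _)).
    transitivity (\sum_(p <- [seq (y.1, y.2, ali x.2) | x <- rho a, y <- Delta x.1])
                  \sum_(q <- [seq (y.1, y.2, ali x.2) | x <- rho b, y <- Delta x.1])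
                  F (mulH p.1.1 q.1.1) (mulH p.1.2 q.1.2) (la p.2 (d q.2))).
      apply: eq_bigr => p _; exact: (Hrhocoass b X _ (Htri2 p)).
    rewrite big_allpairs_dep /=; apply: eq_bigr => x _.
    under [in RHS]eq_bigr => x' _ do rewrite (teqE (HDmul _ _) (kt12 _ HF)) Ev_tmul Hgaig.
    under eq_bigr => y _ do rewrite big_allpairs_dep.
    by rewrite exchange_big.
  -
    have He : forall c x y, eps (c *: x + y) = c * eps x + eps y := Heps.
    have Heb : kbilinear (fun (h : H) (n : G) => eps h *: n).
      apply: kb_mk => [n|h] c x y; first by rewrite He scalerDl scalerA.
      by rewrite scalerDr !scalerA mulrC.
    apply: (Ext G (fun w => Ev (fun (h : H) (n : G) => eps h *: n) (phi w)) gai) => // [|a b].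
      exact: Ev_lin Hpl Heb.
    rewrite EvPh // EvT Hgaig -(Hrhocounit a) -(Hrhocounit b).
    rewrite (kl_sum _ _ (kbl _ Hla)); apply: eq_bigr => x _.
    rewrite (kl_sum _ _ (kl_comp (kbr _ Hla) Hdl)); apply: eq_bigr => y _.
    rewrite Hemul (klZ _ _ Hdl) (klZ _ _ (kbr _ Hla)) (klZ _ _ (kbl _ Hla)).
    by rewrite scalerA mulrC.
  -
    have IdC : forall a a' b' b, la (al a) (ra (la a' (d b')) b) =
        la (mulA a (al a')) (d (mulA (al b') b)) - la (mulA a (mulA a' b')) (d (al b)).
      move=> a a' b' b; rewrite Id1 (klB _ _ (kbr _ Hla)).
      by rewrite (Hlaassoc a (al a') _).1 (Hlaassoc a (mulA a' b') _).1 -!Hdal Halmul Halc2.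
    have HH1 : forall x1 x' y' y1, mulH (mulH x1 (be x')) (mulH (be y') y1)
        = mulH (be x1) (mulH (mulH x' y') y1).
      move=> x1 x' y' y1.
      have Eb : mulH (be y') y1 = be (mulH y' (bei y1)) by rewrite Hbemul Hbc2.
      by rewrite Eb -HassH (HassH x' y' (bei y1)) Hbc2.
    have HH2 : forall x1 x' y' y1, mulH (mulH x1 (mulH x' y')) (be y1)
        = mulH (be x1) (mulH (mulH x' y') y1).
      by move=> *; rewrite HassH.
    have Tcong : forall u v s t, teq (rho u) s -> teq (rho v) t ->
        teq (T u v) (tmul mulH la s (tmap id d t)).
      move=> u v s t Hs Ht; apply: (teq_trans (teq_tmul_l _ HmulH Hla Hs)).
      exact: teq_tmul_r HmulH Hla (teq_tmap (@kl_id _ H) Hdl Ht).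
    move=> a b w; apply: (teq_trans _ (teq_sym (teq_tmul_l _ HmulH Hla (Hrhoal a)))).
    move=> X f Hf.
    pose g := fun h n => \sum_(x <- rho a) \sum_(y <- rho b)
        f (mulH (be x.1) (mulH h y.1)) (la (al x.2) (ra n y.2)).
    have Gbil : kbilinear g.
      rewrite /g; apply: kb_sum => x; apply: kb_sum => y; apply: kb_comp => //.
        exact: kl_comp (kbr _ HmulH) (kbl _ HmulH).
      exact: kl_comp (kbr _ Hla) (kbl _ Hra).
    have E2 : forall w, Ev f (tmul mulH la (tmap be al (rho a)) (tmul mulH ra (phi w) (rho b)))
        = Ev g (phi w).
      move=> w'; rewrite Ev_tmul big_map /=.
      under eq_bigr => x _ do rewrite big_allpairs_dep /=.
      by rewrite exchange_big.
    rewrite -!/(Ev f _) E2.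
    apply: (Ext X (fun w => Ev f (phi (la (al a) (ra w b)))) (fun w => Ev g (phi w))) => [||a' b'].
    + exact: kl_comp (Ev_lin Hpl Hf) (kl_comp (kbr _ Hla) (kbl _ Hra)).
    + exact: Ev_lin Hpl Gbil.
    rewrite /= IdC (klB _ _ (Ev_lin Hpl Hf)) !EvPh //.
    transitivity (\sum_(x' <- rho a') \sum_(y' <- rho b') \sum_(x <- rho a) \sum_(y <- rho b)
        (f (mulH (be x.1) (mulH (mulH x'.1 y'.1) y.1)) (la (mulA x.2 (al x'.2)) (d (mulA (al y'.2) y.2)))
       - f (mulH (be x.1) (mulH (mulH x'.1 y'.1) y.1)) (la (mulA x.2 (mulA x'.2 y'.2)) (d (al y.2))))); last first.
      rewrite EvT; apply: eq_bigr => x' _; apply: eq_bigr => y' _; rewrite /g; apply: eq_bigr => x _.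
      apply: eq_bigr => y _.
      by rewrite IdC (klB _ _ (kbr _ Hf)).
    rewrite sum4B; congr (_ - _).
    + rewrite (teqE (Tcong _ _ _ _ (teq_trans (Hrhomul _ _) (teq_tmul_r _ HmulH HmulA (Hrhoal a')))
                               (teq_trans (Hrhomul _ _) (teq_tmul_l _ HmulH HmulA (Hrhoal b')))) Hf).
      rewrite Ev_tmul big_allpairs_dep exchange_big big_map.
      apply: eq_bigr => x' _.
      under eq_bigr => x _ do rewrite big_map big_allpairs_dep big_map.
      rewrite exchange_big; apply: eq_bigr => y' _; apply: eq_bigr => x _; apply: eq_bigr => y _ /=.
      by rewrite HH1.
    + rewrite (teqE (Tcong _ _ _ _ (teq_trans (Hrhomul _ _) (teq_tmul_r _ HmulH HmulA (Hrhomul a' b')))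
                               (Hrhoal b)) Hf).
      rewrite Ev_tmul big_allpairs_dep.
      under eq_bigr => x _ do rewrite big_allpairs_dep.
      rewrite exchange_big; apply: eq_bigr => x' _.
      rewrite exchange_big; apply: eq_bigr => y' _; apply: eq_bigr => x _.
      rewrite !big_map; apply: eq_bigr => y _ /=.
      by rewrite HH2.
  - move=> a.
    have E : d a = la oneA (d (ali a)) by rewrite (Hlaassoc oneA oneA _).2 -Hdal Halc2.
    rewrite E; apply: (teq_trans (HphiT oneA (ali a))).
    apply: (teq_trans (teq_tmul_l _ HmulH Hla Hrho1)).
    rewrite -{2}[a]Halc2.
    apply: (teq_trans _ (teq_sym (teq_tmap (@kl_id _ H) Hdl (Hrhoal (ali a))))).
    move=> X f Hf; rewrite -!/(Ev f _) Ev_tmul !Ev_tmap /Ev big_seq1 big_map; apply: eq_bigr => y _.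
    by rewrite /= (HunitH _).1 (Hlaassoc oneA oneA _).2 -Hdal.
- move=> [phi [Hpl Hpga HphiT]] s Hs X f Hf.
  rewrite big_nil big_flatten big_map /=.
  transitivity (\sum_(x <- s) Ev f (phi (la x.1 (d x.2)))).
    apply: eq_bigr => x _; exact: (esym (teqE (HphiT x.1 x.2) Hf)).
  rewrite -(kl_sum _ _ (Ev_lin Hpl Hf)) Hs; exact: kl0 (Ev_lin Hpl Hf).
- move=> H3.
  have Z0 : forall (s : seq (A * A)) (X : lmodType k) (f : H -> G -> X), kbilinear f ->
      \sum_(x <- s) la x.1 (d x.2) = 0 -> \sum_(x <- s) Ev f (T x.1 x.2) = 0.
    move=> s X f Hf Hs; have := H3 s Hs X f Hf.
    rewrite big_nil big_flatten big_map; exact.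
  have K : forall (s t : seq (A * A)), \sum_(x <- s) la x.1 (d x.2) = \sum_(x <- t) la x.1 (d x.2) ->
      forall (X : lmodType k) (f : H -> G -> X), kbilinear f ->
      \sum_(x <- s) Ev f (T x.1 x.2) = \sum_(x <- t) Ev f (T x.1 x.2).
    move=> s t Est X f Hf.
    have := Z0 (s ++ [seq (- x.1, x.2) | x <- t]) X f Hf.
    rewrite !big_cat !big_map /= HNs (HNe X f Hf) Est subrr => /(_ erefl) /eqP.
    by rewrite subr_eq0 => /eqP.
  pose ch w := proj1_sig (constructive_indefinite_description _ (Span w)).
  have Hch : forall w, w = \sum_(x <- ch w) la x.1 (d x.2).
    move=> w; exact: (proj2_sig (constructive_indefinite_description _ (Span w))).
  have EvP : forall w (X : lmodType k) (f : H -> G -> X),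
      Ev f (flatten [seq T x.1 x.2 | x <- ch w]) = \sum_(x <- ch w) Ev f (T x.1 x.2).
    by move=> w X f; rewrite /Ev big_flatten big_map.
  exists (fun w => flatten [seq T x.1 x.2 | x <- ch w]); split.
  + move=> c x y X f Hf; rewrite -!/(Ev f _) Ev_cat Ev_tscale // !EvP.
    rewrite (K _ ([seq (c *: z.1, z.2) | z <- ch x] ++ ch y)) //; last first.
      by rewrite big_cat big_map /= HZs -!Hch.
    by rewrite big_cat big_map /= (HZe X f Hf).
  + move=> w X f Hf; rewrite -!/(Ev f _) Ev_tmap !EvP.
    rewrite (K _ [seq (al z.1, al z.2) | z <- ch w]) //; last first.
      rewrite big_map /= -Hch {1}(Hch w) (kl_sum _ _ Hgal); apply: eq_bigr => z _.
      by rewrite Hgala -Hdal.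
    rewrite big_map /=; apply: eq_bigr => z _; exact: TA.
  + move=> a b X f Hf; rewrite -!/(Ev f _) EvP (K _ [:: (a, b)]) //; last by rewrite big_seq1 -Hch.
    by rewrite big_seq1.
Qed.
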